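(* Let $G$ be a graph without isolated vertices and $T$ a solution counting decision tree for $\varphi(G)$. Let $u$ be a node of $T$ labelled by a variable $x$ that is not forced to $1$ by $A_u$, and let $F^u=\varphi(G)|_{A_u}$. Then $|F^u|_{\neg x}|/|F^u|\geq (1/2)^{|N^u(x)|+1}$ and $|F^u|_{x}|/|F^u|\geq 1/2$.
   Context: $\varphi(G)$ is the CNF on variables $V(G)$ with clauses $(u\vee v)$ for $\{u,v\}\in E(G)$. Boolean functions are identified with their sets of satisfying assignments (sets of literals); $F|_S$ is the function on the remaining variables whose satisfying assignments are the $S'$ with $S\cup S'$ satisfying $F$; $|\cdot|$ counts satisfying assignments. Decision tree for $F$ (not constant false): root labelled by some $x\in Var(F)$; for each literal $\ell\in\{x,\neg x\}$ occurring in some satisfying assignment, an outgoing edge labelled $\ell$ whose head is a leaf if $|Var(F)|=1$ and otherwise the root of a decision tree for $F|_\ell$. A solution counting decision tree additionally gives the edge leaving node $w$ with label $\ell$ the weight $|F|_{A_w\cup\{\ell\}}|/|F|_{A_w}|$. $A_w$ is the set of literals labelling the root-$w$ path. A variable $y$ is forced to $1$ by $A_u$ if some neighbour $z$ of $y$ in $G$ has $\neg z\in A_u$. $N^u(y)$ is the set of neighbours $z$ of $y$ that do not occur in $A_u$ and are not forced to $1$ by $A_u$. *)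

(* Defs.v *)
From mathcomp Require Import all_boot all_order all_algebra.
Set Implicit Arguments. Unset Strict Implicit. Unset Printing Implicit Defensive.

Section Defs.
Variable V : finType.

(* A literal (x, b) means "x = b"; (x,true) is x, (x,false) is ~x. *)
Definition lit := (V * bool)%type.

Definition sat_phi (G : rel V) (s : {ffun V -> bool}) : bool :=
  [forall u, forall v, G u v ==> (s u || s v)].

(* |phi(G)|_A| : number of satisfying assignments of the restriction,
   i.e. of satisfying total assignments extending the partial assignment A. *)
Definition cnt (G : rel V) (A : seq lit) : nat :=
  #|[set s : {ffun V -> bool} | sat_phi G s && all (fun l => s l.1 == l.2) A]|.

Definition forced (G : rel V) (A : seq lit) (y : V) : bool :=
  [exists z, G y z && ((z, false) \in A)].

Definition Nu (G : rel V) (A : seq lit) (y : V) : {set V} :=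
  [set z | G y z && (z \notin [seq l.1 | l <- A]) && ~~ forced G A z].

End Defs.

(* Decision trees: a leaf, or a node labelled by a variable with an optional
   outgoing edge labelled ~x (first) and x (second). *)
Inductive dtree (V : Type) :=
| DLeaf
| DNode of V & option (dtree V) & option (dtree V).
Arguments DLeaf {V}.

(* is_dtree G vars A t : t is a decision tree for F = phi(G)|_A, whose
   variable set is vars. *)
Fixpoint is_dtree (V : finType) (G : rel V) (vars : {set V}) (A : seq (lit V))
  (t : dtree V) : Prop :=
  match t with
  | DLeaf => False
  | DNode x o0 o1 =>
      [/\ x \in vars, 0 < cnt G A,
        match o0 with
        | None => cnt G ((x, false) :: A) = 0
        | Some t' => 0 < cnt G ((x, false) :: A) /\
            (if #|vars| == 1 then t' = DLeaf
             else is_dtree G (vars :\ x) ((x, false) :: A) t')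
        end &
        match o1 with
        | None => cnt G ((x, true) :: A) = 0
        | Some t' => 0 < cnt G ((x, true) :: A) /\
            (if #|vars| == 1 then t' = DLeaf
             else is_dtree G (vars :\ x) ((x, true) :: A) t')
        end]
  end.

(* The internal nodes of t, as pairs (label x, A_u) where A_u is the set
   (listed as a sequence) of literals on the root-u path; A is the path
   prefix accumulated so far. *)
Fixpoint dt_nodes (V : Type) (A : seq (V * bool)) (t : dtree V)
  : seq (V * seq (V * bool)) :=
  match t with
  | DLeaf => [::]
  | DNode x o0 o1 =>
      (x, A) ::
      (match o0 with None => [::] | Some t' => dt_nodes ((x, false) :: A) t' end) ++
      (match o1 with None => [::] | Some t' => dt_nodes ((x, true) :: A) t' end)
  end.

(* Main.v *)
Require Import Defs.
From mathcomp Require Import all_boot all_order all_algebra.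
Import Order.TTheory GRing.Theory Num.Theory.

Section H.
Variable V : finType.
Implicit Types (W : {set V}) (t : {ffun V -> bool}).

Lemma card_agree W t :
  #|[set s : {ffun V -> bool} | [forall v, (v \notin W) ==> (s v == t v)]]| <= 2 ^ #|W|.
Proof.
set B := [set s : {ffun V -> bool} | _].
pose h (s : {ffun V -> bool}) := [ffun v => s v (+) t v].
have hinj : injective h.
  move=> s1 s2 /ffunP E; apply/ffunP=> v; have := E v; rewrite !ffunE.
  by case: (s1 v); case: (s2 v); case: (t v).
rewrite -(card_imset _ hinj).
have -> : 2 = #|{: bool}| by rewrite card_bool.
rewrite -(card_pffun_on false); apply: subset_leq_card; apply/subsetP=> _ /imsetP[s Hs ->].
apply/pffun_onP; split; last by [].
apply/subsetP=> v; rewrite inE ffunE; apply: contraR => vW.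
by move: Hs; rewrite inE => /forallP/(_ v); rewrite vW /= => /eqP ->; case: (t v).
Qed.

Lemma fiber_bound (A : {set {ffun V -> bool}}) W
  (f : {ffun V -> bool} -> {ffun V -> bool})
  (Hf : forall s v, v \notin W -> f s v = s v) :
  #|A| <= #|f @: A| * 2 ^ #|W|.
Proof.
rewrite -sum1_card (partition_big f (mem (f @: A))) /=; last first.
  by move=> s sA; apply: imset_f.
rewrite -sum_nat_const; apply: leq_sum => t /imsetP[s0 _ ->].
rewrite sum1_card; apply: leq_trans (card_agree W (f s0)).
apply: subset_leq_card; apply/subsetP=> s; rewrite !inE => /andP[_ /eqP <-].
by apply/forallP=> v; apply/implyP=> vW; rewrite Hf.
Qed.
End H.
Lemma rat_bound (a b k : nat) : (0 < b)%N -> (b <= a * 2^k)%N ->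
  ((1/2 : rat)^+k <= a%:R / b%:R)%R.
Proof.
move=> b0 hb; rewrite ler_pdivlMr ?ltr0n //.
have hb' : (b%:R <= a%:R * 2%:R ^+ k :> rat)%R by rewrite -natrX -natrM ler_nat.
apply: (le_trans (ler_wpM2l _ hb')); first by rewrite exprn_ge0.
rewrite mulrCA -exprMn div1r mulVf // expr1n mulr1 //.
Qed.

Section T.
Variable V : finType.
Variable G : rel V.

Lemma dtree_nodes n : forall (vars : {set V}) (A : seq (lit V)) (t : dtree V), #|vars| <= n -> is_dtree G vars A t ->
  (forall y, y \in vars -> y \notin [seq l.1 | l <- A]) ->
  forall x Au, (x,Au) \in dt_nodes A t -> 0 < cnt G Au /\ x \notin [seq l.1 | l <- Au].
Proof.
elim: n => [|n IH] vars A [|y o0 o1] //= Hc [yv c0 H0 H1] Hinv x Au.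
- by move: Hc; rewrite leqn0 => /eqP/cards0_eq E; rewrite E inE in yv.
have sub : forall b o, (match o with None => cnt G ((y, b) :: A) = 0
        | Some t' => 0 < cnt G ((y, b) :: A) /\
            (if #|vars| == 1 then t' = DLeaf
             else is_dtree G (vars :\ y) ((y, b) :: A) t') end) ->
    (x,Au) \in (match o with None => [::] | Some t' => dt_nodes ((y, b) :: A) t' end) ->
    0 < cnt G Au /\ x \notin [seq l.1 | l <- Au].
  move=> b [t'|] //= [_]; case: eqP => [_ -> //|c1 Ht'].
  move=> Hin; apply: (IH (vars :\ y) _ t' _ Ht' _ x Au Hin).
    by move: Hc; rewrite (cardsD1 y vars) yv.
  move=> z; rewrite in_setD1 => /andP[zy zv] /=.
  by rewrite in_cons negb_or zy Hinv.
rewrite in_cons mem_cat => /orP[/eqP[-> ->]|/orP[]]; last by apply: sub H1.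
  by split=> //; apply: Hinv.
by apply: sub H0.
Qed.
End T.

Local Open Scope ring_scope.

Theorem lemma10 (V : finType) (G : rel V)
  (Gsym : symmetric G) (Girr : irreflexive G)
  (Hno_iso : forall v : V, exists w : V, G v w)
  (T : dtree V) (HT : is_dtree G [set: V] [::] T)
  (x : V) (Au : seq (V * bool))
  (Hu : (x, Au) \in dt_nodes [::] T)
  (Hnf : ~~ forced G Au x) :
  (1 / 2 : rat) ^+ (#|Nu G Au x|.+1)
    <= (cnt G ((x, false) :: Au))%:R / (cnt G Au)%:R
  /\ (1 / 2 : rat) <= (cnt G ((x, true) :: Au))%:R / (cnt G Au)%:R.
Proof.
have [Hc Hx] := @dtree_nodes V G _ _ _ _ (leqnn #|[set: V]|) HT (fun y _ => isT) x Au Hu.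
set S := [set s : {ffun V -> bool} | sat_phi G s && all (fun l => s l.1 == l.2) Au].
have cS : cnt G Au = #|S| by [].
have Sall : forall s, s \in S -> sat_phi G s /\ forall l, l \in Au -> s l.1 = l.2.
  by move=> s; rewrite inE => /andP[-> /allP H]; split=> // l /H /eqP.
have notAu : forall l, l \in Au -> l.1 != x.
  by move=> l lA; apply: contraNneq Hx => <-; apply: map_f.
split.
- set N := Nu G Au x.
  have xN : x \notin N by rewrite inE Girr.
  have lN : forall l, l \in Au -> l.1 \notin N.
    by move=> l lA; rewrite inE (map_f _ lA) andbF.
  have key : forall s, s \in S -> forall w, G x w -> w \notin N -> s w.
    move=> s /Sall[sat sA] w xw; rewrite inE xw /= negb_and !negbK => /orP[/mapP[l lA wl]|fw].
      subst w; rewrite (sA l lA); case E: l.2 => //; case/negP: Hnf.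
      apply/existsP; exists l.1; rewrite xw /=; by case: l lA E {xw} => a [] //=.
    move: fw; rewrite /forced => /existsP[z /andP[wz zA]]; have := sA _ zA => /= sz.
    by move/forallP: sat => /(_ w)/forallP/(_ z); rewrite wz sz orbF.
  pose f0 (s : {ffun V -> bool}) : {ffun V -> bool} :=
    [ffun v => if v == x then false else if v \in N then true else s v].
  have Hf : forall s v, v \notin x |: N -> f0 s v = s v.
    by move=> s v; rewrite in_setU1 negb_or => /andP[vx vN]; rewrite ffunE (negbTE vx) (negbTE vN).
  have hfb := @fiber_bound V S _ f0 Hf.
  have sub : f0 @: S \subset [set s : {ffun V -> bool} | sat_phi G s &&
       all (fun l => s l.1 == l.2) ((x, false) :: Au)].
    apply/subsetP=> _ /imsetP[s sS ->]; rewrite inE /=.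
    have [sat sA] := Sall s sS.
    apply/and3P; split.
    + apply/forallP=> u; apply/forallP=> w; apply/implyP=> uw.
      rewrite !ffunE; case: (eqVneq u x) => [eux|ux].
        have wx : w != x by apply: contraTneq uw => ->; rewrite eux Girr.
        rewrite (negbTE wx) /=; case: ifP => // wN.
        by apply: (key s sS w); rewrite ?wN // -eux.
      case: (eqVneq w x) => [ewx|wx].
        rewrite orbF; case: ifP => // uN.
        by apply: (key s sS u); rewrite ?uN // Gsym -ewx.
      move/forallP: sat => /(_ u)/forallP/(_ w); rewrite uw /=.
      by case: (u \in N); case: (w \in N) => //=; rewrite ?orbT.
    + by rewrite ffunE eqxx.
    + apply/allP=> l lA; rewrite ffunE (negbTE (notAu l lA)) (negbTE (lN l lA)).
      by rewrite (sA l lA).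
  apply: rat_bound; first by rewrite cS.
  rewrite cS; apply: (leq_trans hfb).
  rewrite cardsU1 xN add1n; rewrite leq_mul2r; apply/orP; right.
  exact: subset_leq_card sub.
- pose f1 (s : {ffun V -> bool}) : {ffun V -> bool} :=
    [ffun v => if v == x then true else s v].
  have Hf : forall s v, v \notin [set x] -> f1 s v = s v.
    by move=> s v; rewrite in_set1 => vx; rewrite ffunE (negbTE vx).
  have hfb := @fiber_bound V S _ f1 Hf.
  have sub : f1 @: S \subset [set s : {ffun V -> bool} | sat_phi G s &&
       all (fun l => s l.1 == l.2) ((x, true) :: Au)].
    apply/subsetP=> _ /imsetP[s sS ->]; rewrite inE /=.
    have [sat sA] := Sall s sS.
    apply/and3P; split.
    + apply/forallP=> u; apply/forallP=> w; apply/implyP=> uw.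
      rewrite !ffunE; case: eqP => //= _; case: eqP => //= _; rewrite ?orbT //.
      by move/forallP: sat => /(_ u)/forallP/(_ w); rewrite uw.
    + by rewrite ffunE eqxx.
    + apply/allP=> l lA; rewrite ffunE (negbTE (notAu l lA)).
      by rewrite (sA l lA).
  rewrite -[X in X <= _]expr1; apply: rat_bound => //.
  rewrite cS; apply: (leq_trans hfb).
  rewrite cards1 leq_mul2r; apply/orP; right.
  exact: subset_leq_card sub.
Qed.
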